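(* $X=\{x\in\mathrm{Cay}:\tilde\upsilon(\gamma(x))=\mathrm{sort}(x)\}$.
   Context: $\mathrm{Cay}$ is the set of Cayley permutations (words of positive integers in which every integer from $1$ to the maximum occurs); $\mathrm{sort}(x)$ is the weakly increasing rearrangement of $x$. For $x$ of length $n$, $\gamma(x)$ is the permutation of $[n]$ obtained by sorting the pairs $(x(i),i)$ increasingly by first coordinate, ties by decreasing second coordinate, and reading off the second coordinates. For a permutation $\pi$ of $[n]$ and $i\in[n]$, let $J(i)=0$ if $\pi(i)=1$ and otherwise $J(i)$ is the index with $\pi(J(i))=\pi(i)-1$. The site before $\pi(1)$ is $\eta$-active; the site after $\pi(i)$ is $\eta$-active iff $J(i)<i$, or $i<n$ and $\pi(i)<\pi(i+1)$. $\tilde\upsilon(\pi)$ is the word of length $n$ whose $j$-th letter is the number of $\eta$-active sites to the left of $\pi(j)$. $\eta(\pi)$ is the word with $\eta(\pi)(\pi(j))=\tilde\upsilon(\pi)(j)$ for all $j$, and $X=\{\eta(\pi):\pi\text{ a permutation}\}$. *)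

(* Defs.v *)
(* Words are seq nat; positions and values are 1-based:
   the i-th letter (1 <= i <= size w) is nth 0 w i.-1. *)
From mathcomp Require Import all_boot.
Set Implicit Arguments. Unset Strict Implicit. Unset Printing Implicit Defensive.

Definition at1 (w : seq nat) (i : nat) : nat := nth 0 w i.-1.

Definition wmax (w : seq nat) : nat := foldr maxn 0 w.

Definition is_cay (x : seq nat) : bool :=
  all (fun a => 0 < a) x && all (fun k => k \in x) (iota 1 (wmax x)).

Definition is_perm (p : seq nat) : bool := perm_eq p (iota 1 (size p)).

Definition sortw (x : seq nat) : seq nat := sort leq x.

Definition gamma_rel (x : seq nat) (i j : nat) : bool :=
  (at1 x i < at1 x j) || ((at1 x i == at1 x j) && (j <= i)).
Definition gamma (x : seq nat) : seq nat := sort (gamma_rel x) (iota 1 (size x)).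

Definition Jidx (p : seq nat) (i : nat) : nat :=
  if at1 p i == 1 then 0 else (index (at1 p i).-1 p).+1.

(* site k (0 <= k <= n) is the site right after pi(k); site 0 is before pi(1) *)
Definition eta_active (p : seq nat) (k : nat) : bool :=
  (k == 0) || (Jidx p k < k) || ((k < size p) && (at1 p k < at1 p k.+1)).

(* upsilon-tilde: j-th letter = number of active sites to the left of pi(j),
   i.e. active sites among 0, ..., j-1 *)
Definition upsilon_t (p : seq nat) : seq nat :=
  [seq count (eta_active p) (iota 0 j) | j <- iota 1 (size p)].

(* eta(pi)(pi(j)) = upsilon-tilde(pi)(j) *)
Definition eta (p : seq nat) : seq nat :=
  [seq at1 (upsilon_t p) (index v p).+1 | v <- iota 1 (size p)].

Definition inX (x : seq nat) : Prop := exists p, is_perm p /\ eta p = x.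

(* Main.v *)
Require Import Defs.
From mathcomp Require Import all_boot.
From mathcomp Require Import zify.
Set Implicit Arguments. Unset Strict Implicit. Unset Printing Implicit Defensive.

Lemma gr_trans x : transitive (gamma_rel x).
Proof.
move=> j i k; rewrite /gamma_rel => /orP[h1|/andP[/eqP e1 h1]] /orP[h2|/andP[/eqP e2 h2]];
 apply/orP; [left; lia|left; lia|left; lia|right; apply/andP; split; [apply/eqP; lia|lia]].
Qed.

Lemma gr_asym x : antisymmetric (gamma_rel x).
Proof.
move=> i j; rewrite /gamma_rel => /andP[/orP[h1|/andP[/eqP e1 h1]] /orP[h2|/andP[/eqP e2 h2]]]; lia.
Qed.

Lemma gr_total x : total (gamma_rel x).
Proof.
move=> i j; rewrite /gamma_rel.
case: (ltngtP (at1 x i) (at1 x j)) => h; rewrite ?h ?eqxx /= ?orbT //.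
by rewrite leq_total.
Qed.

Lemma leq_trans' : transitive leq. Proof. exact: leq_trans. Qed.

Lemma map_at1_iota x : map (at1 x) (iota 1 (size x)) = x.
Proof.
rewrite (iotaDl 1 0) -map_comp.
transitivity (mkseq (nth 0 x) (size x)); last exact: mkseq_nth.
by rewrite /mkseq; apply: eq_map => i.
Qed.

Lemma keyB x q : perm_eq q (iota 1 (size x)) -> sorted (gamma_rel x) q ->
  sortw x = map (at1 x) q.
Proof.
move=> pq sq; apply: (sorted_eq leq_trans' anti_leq).
- exact: sort_sorted leq_total _.
- rewrite sorted_map; apply: sub_sorted sq => i j /=; rewrite /gamma_rel => /orP[h|/andP[/eqP -> _]] //.
  exact: ltnW.
- rewrite /sortw perm_sort -{1}(map_at1_iota x) perm_sym; exact: perm_map.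
Qed.

Lemma gamma_perm x : perm_eq (gamma x) (iota 1 (size x)).
Proof. by rewrite /gamma perm_sort. Qed.

Lemma size_gamma x : size (gamma x) = size x.
Proof. by rewrite /gamma size_sort size_iota. Qed.

Lemma at1_map_iota (f : nat -> nat) n v : 0 < v <= n ->
  at1 (map f (iota 1 n)) v = f v.
Proof.
move=> /andP[h1 h2]; rewrite /at1 (nth_map 0); last by rewrite size_iota; lia.
rewrite nth_iota; last lia. congr f; lia.
Qed.

Lemma dir2 x : upsilon_t (gamma x) = sortw x -> inX x.
Proof.
move=> hu; exists (gamma x); split.
  by rewrite /is_perm size_gamma gamma_perm.
have hs := keyB (gamma_perm x) (sort_sorted (@gr_total x) _).
rewrite /eta hu hs size_gamma.
transitivity (map (at1 x) (iota 1 (size x))); last exact: map_at1_iota.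
apply/eq_in_map => v vin.
have vg : v \in gamma x by rewrite (perm_mem (gamma_perm x)).
rewrite /at1 /= (nth_map 0); last by rewrite index_mem.
by rewrite nth_index.
Qed.

Definition uf p j := count (eta_active p) (iota 0 j).

Lemma ufS p j : uf p j.+1 = uf p j + eta_active p j.
Proof. by rewrite /uf -addn1 iotaD count_cat /= addn0 add0n. Qed.

Lemma nth_ups p j : j < size p -> nth 0 (upsilon_t p) j = uf p j.+1.
Proof.
move=> h; rewrite /upsilon_t (nth_map 0) ?size_iota // nth_iota //.
Qed.

Lemma size_ups p : size (upsilon_t p) = size p.
Proof. by rewrite size_map size_iota. Qed.

Lemma uf_pos p j : 0 < j -> 0 < uf p j.
Proof. by case: j => // j _; rewrite /uf /= /eta_active eqxx. Qed.

Lemma uf_ivt p a b k : a <= b -> uf p a <= k <= uf p b -> exists2 j, a <= j <= b & uf p j = k.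
Proof.
elim: b => [|b IH].
  rewrite leqn0 => /eqP -> h; exists 0 => //; lia.
rewrite leq_eqVlt => /orP[/eqP <- h|hab h]; first by exists a; [lia|lia].
have:= ufS p b; case: (eta_active p b) => /= e.
  case: (k =P uf p b.+1) => [->|ne]; first by exists b.+1 => //; lia.
  have [j hj hk] : exists2 j, a <= j <= b & uf p j = k by apply: IH; lia.
  by exists j => //; lia.
have [j hj hk] : exists2 j, a <= j <= b & uf p j = k by apply: IH; lia.
by exists j => //; lia.
Qed.

Lemma wmax_le k s : 0 < k <= wmax s -> exists2 y, y \in s & k <= y.
Proof.
elim: s => [|a s IH] /=; first lia.
move=> h; case: (leqP k a) => ha; first by exists a; rewrite ?inE ?eqxx.
have [y ys ky] : exists2 y, y \in s & k <= y by apply: IH; lia.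
by exists y; rewrite ?inE ?ys ?orbT.
Qed.

Lemma dir1 p : is_perm p -> is_cay (eta p) /\ upsilon_t (gamma (eta p)) = sortw (eta p).
Proof.
rewrite /is_perm => pp.
set n := size p; set x := eta p; set u := upsilon_t p.
have sx : size x = n by rewrite /x /eta size_map size_iota.
have up : uniq p by rewrite (perm_uniq pp) iota_uniq.
have memp v : (v \in p) = (0 < v <= n) by rewrite (perm_mem pp) mem_iota; lia.
have atx v : v \in p -> at1 x v = nth 0 u (index v p).
  move=> vp; rewrite /x /eta at1_map_iota -?memp //.
have A : map (at1 x) p = u.
  apply: (@eq_from_nth _ 0); first by rewrite size_map size_ups.
  move=> j; rewrite size_map => hj.
  by rewrite (nth_map 0) // atx ?mem_nth // index_uniq.
have atxj j : j < n -> at1 x (nth 0 p j) = uf p j.+1.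
  by move=> hj; rewrite -nth_ups // -/u -A (nth_map 0).
have sp : sorted (gamma_rel x) p.
  apply/(sortedP 0) => j hj; rewrite /gamma_rel !atxj //; last lia.
  rewrite (ufS p j.+1).
  have : eta_active p j.+1 || (nth 0 p j.+1 <= nth 0 p j).
    rewrite /eta_active /at1 /= -/n hj /=; lia.
  case: (eta_active p j.+1) => /= h; first by rewrite addn1 leqnn.
  by rewrite addn0 ltnn eqxx h.
have gp : gamma x = p.
  apply: (sorted_eq (@gr_trans x) (@gr_asym x)).
  - exact: sort_sorted (@gr_total x) _.
  - exact: sp.
  - by rewrite (perm_trans (gamma_perm x)) // sx perm_sym.
split; last first.
  by rewrite gp (keyB _ sp) ?A // sx.
have Pu : perm_eq u x.
  by rewrite -A -{2}(map_at1_iota x) sx; apply: perm_map.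
rewrite /is_cay; apply/andP; split.
  apply/allP => y; rewrite -(perm_mem Pu) -A => /mapP [v vp ->].
  by rewrite atx // nth_ups ?uf_pos // index_mem.
apply/allP => k; rewrite mem_iota => hk.
have [y yx ky] : exists2 y, y \in x & k <= y by apply: wmax_le; lia.
move: yx ky; rewrite -(perm_mem Pu) -A => /mapP [v vp ->] ky.
set i := index v p in ky.
have hi : i < n by rewrite index_mem.
rewrite atx // nth_ups // in ky.
have [j hj ujk] : exists2 j, 1 <= j <= i.+1 & uf p j = k.
  apply: uf_ivt => //; rewrite ky andbT; have := uf_pos p (ltn0Sn 0).
  have -> : uf p 1 = 1 by rewrite /uf /= /eta_active.
  lia.
rewrite -ujk -(perm_mem Pu) -A; apply/mapP; exists (nth 0 p j.-1); first by apply: mem_nth; apply: (leq_ltn_trans _ hi); move: hj; case: j {ujk}.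
rewrite atxj; last by apply: (leq_ltn_trans _ hi); move: hj; case: j {ujk}.
by congr uf; lia.
Qed.

Theorem lemma7p4 (x : seq nat) :
  inX x <-> (is_cay x /\ upsilon_t (gamma x) = sortw x).
Proof.
split.
  by move=> [p [pp <-]]; apply: dir1.
by move=> [_ h]; apply: dir2.
Qed.
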